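(* Let $R$ be a local ring and $R\subset S$ a ring extension such that $S$ is of finite type as an $R$-algebra. Then $R\subset S$ is Prüfer if and only if there is a strong divisor $s\in\Delta(R)$ such that $S=R_s$ (as $R$-algebras).
   Context: All rings are commutative with identity; ''local'' means having a unique maximal ideal. A strong divisor of a local ring $R$ is a regular element $t\in R$ such that $Rt$ is comparable under inclusion with every ideal of $R$; $\Delta(R)$ is the set of strong divisors. An extension $A\subseteq B$ is Prüfer if $A\subseteq C$ is a flat epimorphism for each intermediate ring $C$. $R_s$ denotes the localization of $R$ at the powers of $s$. *)

(* Defs.v *)
From HB Require Import structures.
From mathcomp Require Import all_boot all_order all_algebra.
Set Implicit Arguments. Unset Strict Implicit. Unset Printing Implicit Defensive.
Import GRing.Theory.
Local Open Scope ring_scope.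

Definition is_ideal (R : comNzRingType) (I : R -> Prop) : Prop :=
  [/\ I 0, (forall x y, I x -> I y -> I (x + y)) & (forall r x, I x -> I (r * x))].

Definition is_maximal_ideal (R : comNzRingType) (M : R -> Prop) : Prop :=
  [/\ is_ideal M, ~ M 1 &
      forall J : R -> Prop, is_ideal J -> (forall x, M x -> J x) ->
        J 1 \/ (forall x, J x -> M x)].

Definition is_local (R : comNzRingType) : Prop :=
  exists M : R -> Prop, is_maximal_ideal M /\
    forall M' : R -> Prop, is_maximal_ideal M' -> forall x, M' x <-> M x.

Definition regular (R : comNzRingType) (t : R) : Prop :=
  forall x : R, t * x = 0 -> x = 0.

Definition principal (R : comNzRingType) (t : R) : R -> Prop :=
  fun x => exists r, x = r * t.

Definition strong_divisor (R : comNzRingType) (t : R) : Prop :=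
  regular t /\
  forall I : R -> Prop, is_ideal I ->
    (forall x, principal t x -> I x) \/ (forall x, I x -> principal t x).

Definition is_subring (S : comNzRingType) (C : S -> Prop) : Prop :=
  [/\ C 1, (forall x y, C x -> C y -> C (x - y)) & (forall x y, C x -> C y -> C (x * y))].

Definition finite_type (R S : comNzRingType) (f : {rmorphism R -> S}) : Prop :=
  exists xs : seq S, forall P : S -> Prop,
    is_subring P -> (forall r, P (f r)) -> (forall x, x \in xs -> P x) ->
    forall x, P x.

Definition rmorph_on (S : comNzRingType) (D : comPzRingType) (C : S -> Prop) (g : S -> D) : Prop :=
  [/\ g 1 = 1, (forall x y, C x -> C y -> g (x + y) = g x + g y)
    & (forall x y, C x -> C y -> g (x * y) = g x * g y)].

Definition epi_into (R S : comNzRingType) (f : {rmorphism R -> S}) (C : S -> Prop) : Prop :=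
  forall (D : comPzRingType) (g h : S -> D),
    rmorph_on C g -> rmorph_on C h -> (forall r, g (f r) = h (f r)) ->
    forall x, C x -> g x = h x.

(* C is flat as an R-module via f (equational criterion of flatness) *)
Definition flat_into (R S : comNzRingType) (f : {rmorphism R -> S}) (C : S -> Prop) : Prop :=
  forall (n : nat) (a : 'I_n -> R) (m : 'I_n -> S),
    (forall i, C (m i)) -> \sum_i f (a i) * m i = 0 ->
    exists (k : nat) (b : 'I_n -> 'I_k -> R) (y : 'I_k -> S),
      [/\ forall j, C (y j),
          forall i, m i = \sum_j f (b i j) * y j
        & forall j, \sum_i a i * b i j = 0].

Definition pruefer (R S : comNzRingType) (f : {rmorphism R -> S}) : Prop :=
  forall C : S -> Prop, is_subring C -> (forall r, C (f r)) ->
    flat_into f C /\ epi_into f C.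

(* (S, f) is the localization R_s of R at the powers of s, as an R-algebra
   (standard characterization: f s invertible, every element is f r / f s ^ n,
   and the kernel of f is the s-power torsion). *)
Definition is_localization_at (R S : comNzRingType) (f : {rmorphism R -> S}) (s : R) : Prop :=
  [/\ (exists u : S, f s * u = 1),
      (forall x : S, exists (r : R) (n : nat), x * f s ^+ n = f r)
    & (forall r : R, f r = 0 -> exists n : nat, s ^+ n * r = 0)].

(* Main.v *)
Require Import Defs.
From HB Require Import structures.
From mathcomp Require Import all_boot all_order all_algebra.
From mathcomp Require Import boolp classical_sets.
From mathcomp Require Import ring zify.
Set Implicit Arguments. Unset Strict Implicit. Unset Printing Implicit Defensive.
Import GRing.Theory.
Local Open Scope ring_scope.

Section Local.
Variable R : comNzRingType.

Lemma krull (x : R) : ~ (exists y, x * y = 1) ->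
  exists M : R -> Prop, is_maximal_ideal M /\ M x.
Proof.
move=> nu.
pose P (A : R -> Prop) := A = (fun _ => False) \/ [/\ is_ideal A, ~ A 1 & A x].
have [|A [PA Amax]] := @Zorn_bigcup R P.
  move=> F FP Ftot.
  have [[A0 [FA0 [iA0 nA0 xA0]]]|nF] :=
    pselect (exists A, F A /\ [/\ is_ideal A, ~ A 1 & A x]).
    have memI A y : F A -> A y -> [/\ is_ideal A, ~ A 1 & A x].
      move=> FA Ay; case: (FP A FA) => // eA; by rewrite eA in Ay.
    right; split.
    - split.
      + by exists A0 => //; case: iA0.
      + move=> y z [A1 FA1 A1y] [A2 FA2 A2z].
        have [[i1 _ _] [i2 _ _]] := (memI _ _ FA1 A1y, memI _ _ FA2 A2z).
        case: (Ftot _ _ FA1 FA2) => sub.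
          by exists A2 => //; case: i2 => _ + _; apply => //; apply: sub.
        by exists A1 => //; case: i1 => _ + _; apply => //; apply: sub.
      + move=> r y [A1 FA1 A1y]; have [[_ _ +] _ _] := memI _ _ FA1 A1y.
        by move=> h; exists A1 => //; apply: h.
    - by move=> [A1 FA1 A1y]; have [_ + _] := memI _ _ FA1 A1y.
    - by exists A0.
  left; apply: funext => y; apply: propext; split => // -[A1 FA1 A1y].
  case: (FP A1 FA1) => eA; first by rewrite eA in A1y.
  by apply: nF; exists A1.
have Px : P (fun y => exists r, y = r * x).
  right; split.
  - split; first by exists 0; rewrite mul0r.
    + by move=> y z [a ->] [b ->]; exists (a + b); rewrite mulrDl.
    + by move=> r y [a ->]; exists (r * a); rewrite mulrA.
  - by move=> [r e]; apply: nu; exists r; rewrite mulrC -e.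
  - by exists 1; rewrite mul1r.
case: PA => [eA|[iA nA xA]].
  exfalso; apply: (Amax _ _ Px); rewrite eA; split => // /(_ 0).
  by apply; exists 0; rewrite mul0r.
exists A; split => //; split => // J iJ AJ.
have [J1|nJ1] := pselect (J 1); [by left|right].
move=> y Jy; apply: contrapT => nAy.
apply: (Amax J); last by right; split => //; apply: AJ.
by split => // /(_ y Jy).
Qed.

Lemma local_units : is_local R -> exists M : R -> Prop,
  [/\ is_ideal M, ~ M 1 & forall x, ~ M x -> exists y, x * y = 1].
Proof.
move=> [M [[iM nM _] uM]]; exists M; split => // x nMx.
apply: contrapT => nu; have [M' [mM' M'x]] := krull nu.
by apply: nMx; apply/(uM M' mM').
Qed.
End Local.

Section Backward.
Variables (R S : comNzRingType) (f : {rmorphism R -> S}).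
Hypothesis finj : injective f.

Lemma sd_pow (s : R) : strong_divisor s -> forall n (r : R),
  (exists b, r = b * s ^+ n) \/ (exists a, s ^+ n = a * r).
Proof.
move=> [_ sd]; elim=> [|n IH] r; first by left; exists r; rewrite expr0 mulr1.
have ip : is_ideal (principal r).
  split; first by exists 0; rewrite mul0r.
  - by move=> x y [a ->] [b ->]; exists (a + b); rewrite mulrDl.
  - by move=> c x [a ->]; exists (c * a); rewrite mulrA.
case: (sd _ ip) => H.
  have [a ea] := H s (ex_intro _ 1 (esym (mul1r s))).
  by right; exists (s ^+ n * a); rewrite exprSr ea mulrA.
have [c ec] := H r (ex_intro _ 1 (esym (mul1r r))).
case: (IH c) => [[b eb]|[a ea]].
  by left; exists b; rewrite ec eb exprSr mulrA.
by right; exists a; rewrite exprSr ea ec mulrA.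
Qed.

Lemma unit_pow (x u : S) n : x * u = 1 -> x ^+ n * u ^+ n = 1.
Proof. by move=> h; rewrite -exprMn h expr1n. Qed.

Lemma dichotomy (s : R) : strong_divisor s -> is_localization_at f s ->
  forall x : S, (exists r, x = f r) \/ (exists a, f a * x = 1).
Proof.
move=> sds [[u fu] loc _] x.
have [r [n ex]] := loc x.
have un := unit_pow n fu.
case: (sd_pow sds n r) => [[b eb]|[a ea]].
  left; exists b.
  by rewrite -[x]mulr1 -un mulrA ex eb rmorphM rmorphXn -mulrA un mulr1.
right; exists a.
have e1 : f a * x * f s ^+ n = f s ^+ n by rewrite -mulrA ex -rmorphM -ea rmorphXn.
by rewrite -[_ * x]mulr1 -un mulrA e1 un.
Qed.

Lemma backward (s : R) : strong_divisor s -> is_localization_at f s -> pruefer f.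
Proof.
move=> sds loc C [C1 CB CM] CR.
have dic := dichotomy sds loc.
have den x : C x -> exists w d r, [/\ C w, f d * w = 1 & x = f r * w].
  move=> Cx; case: (dic x) => [[r ->]|[a ea]].
    by exists 1, 1, r; split; rewrite ?rmorph1 ?mulr1.
  by exists x, a, 1; split; rewrite ?rmorph1 ?mul1r.
split.
  move=> n a m Cm sum0.
  have: forall k, exists w d (rr : 'I_n -> R), [/\ C w, f d * w = 1 &
      forall i : 'I_n, (i < k)%N -> m i = f (rr i) * w].
    elim=> [|k [w [d [rr [Cw dw Hrr]]]]].
      by exists 1, 1, (fun _ => 0); split => //; rewrite rmorph1 mul1r.
    have [kn|nk] := ltnP k n; last first.
      exists w, d, rr; split => // i ik; apply: Hrr.
      by apply: (leq_trans (ltn_ord i)).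
    have [w' [d' [r' [Cw' dw' em]]]] := den _ (Cm (Ordinal kn)).
    exists (w * w'), (d * d'),
      (fun i : 'I_n => if (i < k)%N then rr i * d' else r' * d).
    split; first by apply: CM.
      by rewrite rmorphM mulrACA dw dw' mulr1.
    move=> i; rewrite ltnS leq_eqVlt => /orP[/eqP ik|ik].
      have -> : i = Ordinal kn by apply: val_inj.
      by rewrite ltnn em /= rmorphM -[LHS]mulr1 -dw; ring.
    by rewrite ik Hrr // rmorphM -[LHS]mulr1 -dw'; ring.
  move=> /(_ n) [w [d [rr [Cw dw Hrr]]]].
  exists 1%N, (fun i _ => rr i), (fun _ => w); split => //.
    by move=> i; rewrite big_ord1 Hrr.
  move=> j; apply: finj; rewrite rmorph0.
  have h0 : f (\sum_i a i * rr i) * w = 0.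
    rewrite -[RHS]sum0 rmorph_sum mulr_suml; apply: eq_bigr => i _.
    by rewrite rmorphM -mulrA -Hrr.
  by rewrite -[LHS]mulr1 -dw mulrCA h0 mulr0.
move=> D g h [g1 gD gM] [h1 hD hM] gh x Cx.
case: (dic x) => [[r ->]|[a ea]]; first by apply: gh.
have Ca := CR a.
have eg : g (f a) * g x = 1 by rewrite -gM // ea g1.
have eh : h (f a) * h x = 1 by rewrite -hM // ea h1.
have eg' : g (f a) * g x = 1 by rewrite eg.
by rewrite -[g x]mulr1 -eh -(gh a) mulrA [g x * _]mulrC eg' mul1r.
Qed.
End Backward.

Section Assemble.
Variables (R S : comNzRingType) (f : {rmorphism R -> S}).
Hypothesis finj : injective f.

Lemma assemble : finite_type f ->
  (forall z : S, (exists r, z = f r) \/ (exists y, f y * z = 1)) ->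
  exists s : R, strong_divisor s /\ is_localization_at f s.
Proof.
move=> [xs gen] manis.
have [s [[u su] Hs]] : exists s, (exists u, f s * u = 1) /\
    forall x, x \in xs -> exists r, x * f s = f r.
  elim: xs {gen} => [|x xs [s [[u su] Hs]]].
    by exists 1; split => //; exists 1; rewrite rmorph1 mulr1.
  case: (manis x) => [[r ->]|[y ey]].
    exists s; split; first by exists u.
    move=> x'; rewrite in_cons => /orP[/eqP ->|/Hs //].
    by exists (r * s); rewrite rmorphM.
  exists (y * s); split; first by exists (x * u); rewrite rmorphM mulrACA ey su mulr1.
  move=> x'; rewrite in_cons => /orP[/eqP ->|/Hs [r er]].
    by exists s; rewrite rmorphM mulrA [x * _]mulrC ey mul1r.
  by exists (y * r); rewrite rmorphM mulrCA er rmorphM.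
have cmp a : (exists r, a = r * s) \/ (exists y, s = y * a).
  case: (manis (f a * u)) => [[r er]|[y ey]].
    left; exists r; apply: finj.
    by rewrite rmorphM -er -mulrA [u * _]mulrC su mulr1.
  right; exists y; apply: finj.
  by rewrite rmorphM -[LHS]mul1r -ey; rewrite -[X in _ = X]mulr1 -su; ring.
exists s; split.
  split.
    move=> x sx; apply: finj; rewrite rmorph0.
    by rewrite -[f x]mul1r -su mulrAC -rmorphM sx rmorph0 mul0r.
  move=> I [I0 ID IM].
  have [H|H] := pselect (forall a, I a -> principal s a); [by right|left].
  have [a [Ia nsa]] : exists a, I a /\ ~ principal s a.
    apply: contrapT => nh; apply: H => a Ia; apply: contrapT => ns.
    by apply: nh; exists a.
  case: (cmp a) => [[r er]|[y ey]]; first by exfalso; apply: nsa; exists r.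
  by move=> x [r ->]; rewrite ey mulrA; apply: IM.
split; first by exists u.
  have sub : is_subring (fun x => exists r n, x * f s ^+ n = f r).
    split.
    - by exists 1, 0%N; rewrite expr0 mulr1 rmorph1.
    - move=> x y [r [n ex]] [r' [n' ey]].
      exists (r * s ^+ n' - r' * s ^+ n), (n + n')%N.
      rewrite rmorphB !rmorphM !rmorphXn -ex -ey exprD; ring.
    - move=> x y [r [n ex]] [r' [n' ey]].
      exists (r * r'), (n + n')%N.
      rewrite rmorphM -ex -ey exprD; ring.
  move=> x; apply: (gen _ sub) => [r|x' /Hs [r er]].
    by exists r, 0%N; rewrite expr0 mulr1.
  by exists r, 1%N; rewrite expr1.
move=> r /eqP; rewrite -(rmorph0 f) => /eqP /finj ->.
by exists 0%N; rewrite mulr0.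
Qed.
End Assemble.

Section Nak.
Variables (R S : comNzRingType) (f : {rmorphism R -> S}).
Variable M : R -> Prop.
Hypothesis iM : is_ideal M.
Hypothesis nM1 : ~ M 1.
Hypothesis unitM : forall x, ~ M x -> exists y, x * y = 1.

Lemma M0 : M 0. Proof. by case: iM. Qed.
Lemma MD x y : M x -> M y -> M (x + y). Proof. by case: iM => _ h _; apply: h. Qed.
Lemma MM r x : M x -> M (r * x). Proof. by case: iM => _ _ h; apply: h. Qed.
Lemma MMr r x : M x -> M (x * r). Proof. by rewrite mulrC; apply: MM. Qed.
Lemma MN x : M x -> M (- x).
Proof. by move=> h; rewrite -mulN1r; apply: MM. Qed.
Lemma M_unit1 m : M m -> exists v, (1 - m) * v = 1.
Proof.
move=> Mm; apply: unitM => h; apply: nM1.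
by rewrite -(subrK m 1); apply: MD.
Qed.

Lemma nakayama (e : nat -> S) n :
  (forall c : nat -> R, exists c' : nat -> R, (forall j, M (c' j)) /\
     \sum_(j < n) f (c j) * e j = \sum_(j < n) f (c' j) * e j) ->
  forall c : nat -> R, \sum_(j < n) f (c j) * e j = 0.
Proof.
elim: n => [|n IH] H c; first by rewrite big_ord0.
have [c' [Mc' ec']] := H (fun j => (j == n)%:R).
have [v ev] := M_unit1 (Mc' n).
have en : e n = \sum_(j < n) f (v * c' j) * e j.
  move: ec'; rewrite !big_ord_recr /= eqxx rmorph1 mul1r.
  rewrite (eq_bigr (fun _ => 0)); last first.
    by move=> i _; rewrite (ltn_eqF (ltn_ord i)) rmorph0 mul0r.
  rewrite big1 // add0r => h.
  have h2 : f (1 - c' n) * e n = \sum_(i < n) f (c' i) * e i.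
    by rewrite rmorphB rmorph1 mulrBl mul1r {1}h addrK.
  rewrite -[e n]mul1r -(rmorph1 f) -ev rmorphM mulrAC h2 mulr_suml.
  by apply: eq_bigr => i _; rewrite rmorphM; ring.
have IH' : forall c : nat -> R, \sum_(j < n) f (c j) * e j = 0.
  apply: IH => c2.
  have [c'' [Mc'' e'']] := H (fun j => if (j < n)%N then c2 j else 0).
  exists (fun j => c'' j + c'' n * (v * c' j)); split.
    by move=> j; apply: MD => //; apply: MMr.
  move: e''; rewrite !big_ord_recr /= ltnn rmorph0 mul0r addr0.
  rewrite (eq_bigr (fun i : 'I_n => f (c2 i) * e i)); last first.
    by move=> i _; rewrite ltn_ord.
  move=> ->; rewrite en mulr_sumr -big_split /=; apply: eq_bigr => i _.
  by rewrite !rmorphD !rmorphM; ring.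
by rewrite big_ord_recr /= (IH' c) add0r en (IH' (fun j => v * c' j)) mulr0.
Qed.

Lemma hornerf_sum (P : {poly R}) (w : S) :
  (map_poly f P).[w] = \sum_(i < size P) f P`_i * w ^+ i.
Proof.
rewrite (@horner_coef_wide _ (size P)); last by rewrite /map_poly size_poly.
by apply: eq_bigr => i _; rewrite coef_map.
Qed.

Lemma nak_contra (w : S) n (d : nat -> R) : (forall j, M (d j)) ->
  w ^+ n = \sum_(j < n) f (d j) * w ^+ j ->
  forall P : {poly R}, (forall i, M P`_i) -> (map_poly f P).[w] = 1 -> False.
Proof.
move=> Md; case: n => [|k] ewn P MP eP.
  by move: ewn; rewrite expr0 big_ord0 => /eqP; rewrite oner_eq0.
pose MN (x : S) := exists c : nat -> R, (forall j, M (c j)) /\ x = \sum_(j < k.+1) f (c j) * w ^+ j.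
have MN0 : MN 0.
  exists (fun _ => 0); split => [j|]; first exact: M0.
  by rewrite big1 // => i _; rewrite rmorph0 mul0r.
have MNadd x y : MN x -> MN y -> MN (x + y).
  move=> [c [Mc ->]] [c' [Mc' ->]]; exists (fun j => c j + c' j); split.
    by move=> j; apply: MD.
  by rewrite -big_split; apply: eq_bigr => i _ /=; rewrite rmorphD mulrDl.
have MNsc r x : MN x -> MN (f r * x).
  move=> [c [Mc ->]]; exists (fun j => r * c j); split.
    by move=> j; apply: MM.
  by rewrite mulr_sumr; apply: eq_bigr => i _; rewrite rmorphM mulrA.
have MNm m : M m -> MN (f m).
  move=> Mm; exists (fun j => if j == 0%N then m else 0); split.
    by move=> [|j] //=; exact: M0.
  rewrite big_ord_recl /= expr0 mulr1 big1 ?addr0 // => i _.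
  by rewrite rmorph0 mul0r.
have MNw x : MN x -> MN (x * w).
  move=> [c [Mc ->]].
  exists (fun j => (if j is j'.+1 then c j' else 0) + c k * d j); split.
    by move=> [|j]; apply: MD; try exact: M0; try exact: Mc; apply: MM.
  rewrite big_ord_recr /= mulrDl mulr_suml -mulrA -exprSr ewn.
  under [in RHS]eq_bigr do rewrite rmorphD mulrDl.
  rewrite big_split /= [X in _ = X + _]big_ord_recl /= rmorph0 mul0r add0r mulr_sumr.
  congr (_ + _); first by apply: eq_bigr => i _; rewrite exprSr mulrA.
  by apply: eq_bigr => i _; rewrite rmorphM mulrA.
have MNwk x i : MN x -> MN (x * w ^+ i).
  elim: i => [|i IH] h; first by rewrite expr0 mulr1.
  by rewrite exprSr mulrA; apply: MNw; apply: IH.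
have MNsum (I : finType) (F : I -> S) : (forall i, MN (F i)) -> MN (\sum_i F i).
  by move=> h; apply: (big_ind MN) => //; apply: MNadd.
have MN1 : MN 1.
  rewrite -eP hornerf_sum; apply: MNsum => i.
  by apply: MNwk; apply: MNm.
have MNall (c : nat -> R) : MN (\sum_(j < k.+1) f (c j) * w ^+ j).
  apply: MNsum => i; apply: MNsc; rewrite -[w ^+ i]mul1r; exact: MNwk.
have nk : forall c : nat -> R, \sum_(j < k.+1) f (c j) * w ^+ j = 0.
  apply: (@nakayama (fun j => w ^+ j) k.+1) => c.
  by have [c' [Mc' e']] := MNall c; exists c'.
move: (nk (fun j => (j == 0%N)%:R)) => /eqP.
rewrite big_ord_recl /= rmorph1 mul1r expr0 big1 ?addr0 ?oner_eq0 //.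
by move=> i _; rewrite rmorph0 mul0r.
Qed.

Lemma manis_of_L :
  (forall z : S, (exists r, z = f r) \/
     (exists P : {poly R}, (forall i, M P`_i) /\ (map_poly f P).[z] = 1)) ->
  forall z : S, (exists r, z = f r) \/ (exists y, f y * z = 1).
Proof.
move=> L z; case: (L z) => [l|[P [MP eP]]]; first by left.
right.
have [v ev] := M_unit1 (MP 0%N).
pose Q := v *: drop_poly 1 P.
have MQ i : M Q`_i by rewrite coefZ coef_drop_poly; apply: MM.
pose w := (map_poly f Q).[z].
have wz : w * z = 1.
  have e1 : (map_poly f P).[z] = f P`_0 + (map_poly f (drop_poly 1 P)).[z] * z.
    rewrite -{1}(poly_take_drop 1 P) rmorphD rmorphM /= map_polyXn hornerD.
    rewrite hornerM hornerXn expr1; congr (_ + _).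
    rewrite (@horner_coef_wide _ 1%N); last first.
      by rewrite /map_poly; apply: leq_trans (size_poly _ _) (size_take_poly _ _).
    by rewrite big_ord1 expr0 mulr1 coef_map coef_take_poly.
  rewrite /w /Q map_polyZ hornerZ -mulrA.
  have -> : (map_poly f (drop_poly 1 P)).[z] * z = 1 - f P`_0.
    by rewrite eP in e1; rewrite e1 addrC addKr.
  by rewrite -(rmorph1 f) -rmorphB -rmorphM mulrC ev.
pose n := size Q.
have ewn : w ^+ n = \sum_(j < n) f Q`_(n - j.+1) * w ^+ j.
  have -> : w ^+ n = w ^+ n * (w * z) by rewrite wz mulr1.
  rewrite {2}/w hornerf_sum mulrA mulr_sumr mulr_suml.
  rewrite (reindex_inj rev_ord_inj) /=; apply: eq_bigr => i _.
  rewrite -/n; set a := (n - i.+1)%N.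
  have en : n = (i + a).+1 by rewrite /a -addSn addnC subnK.
  have e2 : w ^+ a.+1 * z ^+ a.+1 = 1 by rewrite -exprMn wz expr1n.
  rewrite {1}en exprS exprD.
  transitivity (f Q`_a * w ^+ i * (w ^+ a.+1 * z ^+ a.+1)); first by rewrite !exprS; set A := w ^+ a; set B := z ^+ a; set C := w ^+ i; ring.
  by rewrite e2 mulr1.
case: (L w) => [[r er]|[P2 [MP2 eP2]]].
  by exists r; rewrite -er.
by exfalso; apply: (nak_contra (d := fun j => Q`_(n - j.+1))) ewn _ MP2 eP2.
Qed.
End Nak.

Section FlatSys.
Variables (R S : comNzRingType) (f : {rmorphism R -> S}).

Lemma flat_sys (C : S -> Prop) : flat_into f C ->
  forall (I : finType) (p : nat) (A : nat -> I -> R) (m : I -> S),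
  (forall i, C (m i)) -> (forall k, (k < p)%N -> \sum_i f (A k i) * m i = 0) ->
  exists (K : nat) (B : I -> 'I_K -> R) (y : 'I_K -> S),
    [/\ forall j, C (y j), forall i, m i = \sum_j f (B i j) * y j &
        forall k, (k < p)%N -> forall j, \sum_i A k i * B i j = 0].
Proof.
move=> fl I; elim=> [|p IH] A m Cm eqs.
  exists #|I|, (fun i j => (enum_rank i == j)%:R), (fun j => m (enum_val j)).
  split => // i.
  rewrite (bigD1 (enum_rank i)) //= eqxx rmorph1 mul1r enum_rankK big1 ?addr0 //.
  by move=> j; rewrite eq_sym => /negPf ->; rewrite rmorph0 mul0r.
have [K [B [y [Cy my eB]]]] := IH A m Cm (fun k kp => eqs k (ltnW kp)).
pose a' (j : 'I_K) := \sum_i A p i * B i j.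
have e' : \sum_j f (a' j) * y j = 0.
  transitivity (\sum_i f (A p i) * m i); last exact: eqs.
  under [RHS]eq_bigr do rewrite my mulr_sumr.
  rewrite exchange_big /=; apply: eq_bigr => j _.
  by rewrite rmorph_sum mulr_suml; apply: eq_bigr => i _; rewrite rmorphM mulrA.
have [k' [b [y' [Cy' yb eb]]]] := fl K a' y Cy e'.
exists k', (fun i t => \sum_j B i j * b j t), y'; split => //.
  move=> i; rewrite my.
  under eq_bigr do rewrite yb mulr_sumr.
  rewrite exchange_big /=; apply: eq_bigr => t _.
  by rewrite rmorph_sum mulr_suml; apply: eq_bigr => j _; rewrite rmorphM mulrA.
move=> k; rewrite ltnS leq_eqVlt => /orP[/eqP ->|kp] t.
  transitivity (\sum_j a' j * b j t); last exact: eb.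
  under eq_bigr do rewrite mulr_sumr.
  rewrite exchange_big /=; apply: eq_bigr => j _.
  by rewrite /a' mulr_suml; apply: eq_bigr => i _; rewrite mulrA.
under eq_bigr do rewrite mulr_sumr.
rewrite exchange_big /= big1 // => j _.
by under eq_bigr do rewrite mulrA; rewrite -mulr_suml eB // mul0r.
Qed.
End FlatSys.

Section Quot.
Local Open Scope quotient_scope.
Variables (A : comNzRingType) (J : A -> Prop).
Hypotheses (iJ : is_ideal J) (nJ1 : ~ J 1).

Definition Jb : {pred A} := fun x => `[< J x >].

Lemma Jb_closed : idealr_closed Jb.
Proof.
case: iJ => J0 JD JM; split.
- by apply/asboolP.
- by apply/asboolP.
- move=> a u v /asboolP Ju /asboolP Jv; apply/asboolP; apply: JD => //.
  exact: JM.
Qed.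

HB.instance Definition _ := isIdealr.Build A Jb Jb_closed.

Definition QD := {ideal_quot Jb}.
Definition qpi (x : A) : QD := \pi_QD x.

Lemma qpiE x y : qpi x = qpi y <-> J (x - y).
Proof.
rewrite /qpi; split.
  by move=> /eqP; rewrite -Quotient.idealrBE => /asboolP.
by move=> h; apply/eqP; rewrite -Quotient.idealrBE; apply/asboolP.
Qed.

Lemma qpiM x y : qpi (x * y) = qpi x * qpi y.
Proof. by rewrite /qpi Quotient.pi_mul. Qed.
Lemma qpiD x y : qpi (x + y) = qpi x + qpi y.
Proof. by rewrite /qpi Quotient.pi_add. Qed.
Lemma qpi1 : qpi 1 = 1.
Proof. by rewrite /qpi pi_oner. Qed.
End Quot.

Section EpiStep.
Variables (R S : comNzRingType) (f : {rmorphism R -> S}) (z : S).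

Definition cfz : commr_rmorph f z := fun a => mulrC _ _.
Definition evz : {rmorphism {poly R} -> S} := horner_morph cfz.
Lemma evzE p : evz p = (map_poly f p).[z]. Proof. by []. Qed.
Lemma evzC c : evz c%:P = f c. Proof. by rewrite evzE map_polyC hornerC. Qed.
Lemma evzX : evz 'X = z. Proof. by rewrite evzE map_polyX hornerX. Qed.

Definition Cz (x : S) := exists p, x = evz p.

Lemma Cz0 : Cz 0. Proof. by exists 0; rewrite rmorph0. Qed.
Lemma Cz1 : Cz 1. Proof. by exists 1; rewrite rmorph1. Qed.
Lemma CzD x y : Cz x -> Cz y -> Cz (x + y).
Proof. by move=> [p ->] [q ->]; exists (p + q); rewrite rmorphD. Qed.
Lemma CzN x : Cz x -> Cz (- x).
Proof. by move=> [p ->]; exists (- p); rewrite rmorphN. Qed.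
Lemma CzM x y : Cz x -> Cz y -> Cz (x * y).
Proof. by move=> [p ->] [q ->]; exists (p * q); rewrite rmorphM. Qed.
Lemma Czf r : Cz (f r). Proof. by exists r%:P; rewrite evzC. Qed.
Lemma Czz : Cz z. Proof. by exists 'X; rewrite evzX. Qed.
Lemma Cz_sub : is_subring Cz.
Proof.
split; [exact: Cz1| |exact: CzM].
by move=> x y Cx Cy; apply: CzD => //; apply: CzN.
Qed.

Definition Cpoly (T : {poly S}) := forall i, Cz T`_i.

Lemma CpolyM T U : Cpoly T -> Cpoly U -> Cpoly (T * U).
Proof.
move=> CT CU i; rewrite coefM; apply: (big_ind Cz); [exact: Cz0|exact: CzD|].
by move=> j _; apply: CzM.
Qed.

Definition Ez (Q : {poly S}) := exists s : seq ({poly S} * {poly R}),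
  (forall x, x \in s -> Cpoly x.1 /\ evz x.2 = 0) /\
  Q = \sum_(x <- s) x.1 * map_poly f x.2.

Lemma Ez0 : Ez 0. Proof. by exists [::]; rewrite big_nil. Qed.
Lemma EzD P Q : Ez P -> Ez Q -> Ez (P + Q).
Proof.
move=> [s [Hs ->]] [t [Ht ->]]; exists (s ++ t); split; last by rewrite big_cat.
by move=> x; rewrite mem_cat => /orP[/Hs|/Ht].
Qed.
Lemma EzM T Q : Cpoly T -> Ez Q -> Ez (T * Q).
Proof.
move=> CT [s [Hs ->]]; exists (map (fun x => (T * x.1, x.2)) s); split.
  move=> x /mapP [y ys ->] /=; have [Cy ey] := Hs y ys.
  by split => //; apply: CpolyM.
by rewrite big_map mulr_sumr; apply: eq_bigr => x _; rewrite mulrA.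
Qed.
Lemma EzK q : evz q = 0 -> Ez (map_poly f q).
Proof.
move=> eq; exists [:: (1, q)]; split; last by rewrite big_seq1 mul1r.
move=> x; rewrite inE => /eqP -> /=; split => // i.
by rewrite coef1; case: (i == 0)%N; [exact: Cz1|exact: Cz0].
Qed.

Definition Phi : {rmorphism {poly {poly R}} -> {poly S}} := map_poly evz.
Lemma CpolyPhi P : Cpoly (Phi P).
Proof. by move=> i; rewrite coef_map; exists P`_i. Qed.

Lemma PhiC c : Phi c%:P = (evz c)%:P. Proof. exact: map_polyC. Qed.
Lemma PhiX : Phi 'X = 'X. Proof. exact: map_polyX. Qed.

Definition Jz (P : {poly {poly R}}) := Ez (Phi P).

Lemma Jz_ideal : is_ideal Jz.
Proof.
split; first by rewrite /Jz rmorph0; exact: Ez0.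
  by move=> x y Jx Jy; rewrite /Jz rmorphD; apply: EzD.
by move=> r x Jx; rewrite /Jz rmorphM; apply: EzM => //; apply: CpolyPhi.
Qed.

Lemma JzC p q : evz p = evz q -> Jz (p%:P - q%:P).
Proof.
move=> e; have e0 : evz (p - q) = 0 by rewrite rmorphB e subrr.
rewrite /Jz -polyCB PhiC e0.
exact: Ez0.
Qed.

Lemma PhiCC q : Phi (map_poly polyC q) = map_poly f q.
Proof.
rewrite /Phi /= -map_poly_comp; apply: eq_map_poly => c /=.
by rewrite evzC.
Qed.

Lemma JzCC p q : evz p = evz q ->
  Jz (map_poly polyC p - map_poly polyC q).
Proof.
move=> e; have e0 : evz (p - q) = 0 by rewrite rmorphB e subrr.
by rewrite /Jz -rmorphB PhiCC; apply: EzK.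
Qed.

Lemma epi_step : epi_into f Cz -> Ez (z%:P - 'X).
Proof.
move=> epi.
have CX : Cpoly (z%:P - 'X).
  move=> i; rewrite coefB coefC coefX.
  apply: CzD; first by case: (i == 0)%N; [exact: Czz|exact: Cz0].
  by apply: CzN; case: (i == 1)%N; [exact: Cz1|exact: Cz0].
suff : Jz ('X%:P - 'X).
  by rewrite /Jz rmorphB PhiC PhiX evzX.
have [J1|nJ1] := pselect (Jz 1).
  rewrite -[_ - _]mulr1; case: Jz_ideal => _ _; apply; exact: J1.
pose pickp (x : S) : {poly R} :=
  if pselect (exists p, x = evz p) is left H then projT1 (cid H) else 0.
have pickpE x : Cz x -> evz (pickp x) = x.
  rewrite /pickp; case: pselect => // H _; by case: (cid H) => p /= ->.
pose g (x : S) := qpi Jz_ideal nJ1 (pickp x)%:P.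
pose h (x : S) := qpi Jz_ideal nJ1 (map_poly polyC (pickp x)).
have gE p x : Cz x -> evz p = x -> g x = qpi Jz_ideal nJ1 p%:P.
  move=> Cx e; apply/qpiE; apply: JzC; by rewrite pickpE // e.
have hE p x : Cz x -> evz p = x -> h x = qpi Jz_ideal nJ1 (map_poly polyC p).
  move=> Cx e; apply/qpiE; apply: JzCC; by rewrite pickpE // e.
have rg : rmorph_on Cz g.
  split.
  - by rewrite (gE 1) ?rmorph1 //; [exact: qpi1|exact: Cz1].
  - move=> x y Cx Cy; rewrite (gE (pickp x + pickp y)); last 2 first.
    + exact: CzD.
    + by rewrite rmorphD !pickpE.
    by rewrite polyCD qpiD.
  - move=> x y Cx Cy; rewrite (gE (pickp x * pickp y)); last 2 first.
    + exact: CzM.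
    + by rewrite rmorphM !pickpE.
    by rewrite polyCM qpiM.
have rh : rmorph_on Cz h.
  split.
  - by rewrite (hE 1) ?rmorph1 //; [exact: qpi1|exact: Cz1].
  - move=> x y Cx Cy; rewrite (hE (pickp x + pickp y)); last 2 first.
    + exact: CzD.
    + by rewrite rmorphD !pickpE.
    by rewrite rmorphD qpiD.
  - move=> x y Cx Cy; rewrite (hE (pickp x * pickp y)); last 2 first.
    + exact: CzM.
    + by rewrite rmorphM !pickpE.
    by rewrite rmorphM qpiM.
have agree r : g (f r) = h (f r).
  rewrite (gE r%:P) ?evzC //; last exact: Czf.
  by rewrite (hE r%:P) ?evzC ?map_polyC //; exact: Czf.
have := epi _ g h rg rh agree z Czz.
rewrite (gE 'X) ?evzX //; last exact: Czz.
rewrite (hE 'X) ?evzX ?map_polyX //; last exact: Czz.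
by move/qpiE.
Qed.
End EpiStep.

Section Cond.
Variables (R S : comNzRingType) (f : {rmorphism R -> S}) (z : S).

Lemma conductor_step : flat_into f (Cz f z) -> Ez f z (z%:P - 'X) ->
  exists K (e g : 'I_K -> R) (y : 'I_K -> S),
    [/\ forall t, Cz f z (y t), forall t, f (e t) * z = f (g t)
      & 1 = \sum_t f (e t) * y t].
Proof.
move=> fl [s [Hs es]].
pose L := size s.
pose x0 := ((0 : {poly S}), (0 : {poly R})).
pose bt (l : 'I_L) := (nth x0 s l).1.
pose qt (l : 'I_L) := (nth x0 s l).2.
pose N := (\max_(x <- s) (size x.1 + size x.2)).+1.
have szx l : (size (bt l) + size (qt l) < N)%N.
  by rewrite ltnS; apply: (@leq_bigmax_seq _ s xpredT (fun x => size x.1 + size x.2)) => //; apply: mem_nth.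
have szb l : (size (bt l) < N)%N by apply: leq_ltn_trans (szx l); apply: leq_addr.
have szq l : (size (qt l) < N)%N by apply: leq_ltn_trans (szx l); apply: leq_addl.
have Hsl l : Cpoly f z (bt l) /\ evz f z (qt l) = 0 by apply: Hs; apply: mem_nth.
pose I := (('I_L * 'I_N) + bool)%type.
pose m (i : I) : S := match i with inl (l, j) => (bt l)`_j | inr true => 1 | inr false => z end.
pose A (k : nat) (i : I) : R := match i with
  | inl (l, j) => if (k < j)%N then 0 else (qt l)`_(k - j)
  | inr true => (k == 1)%:R | inr false => - (k == 0)%:R end.
pose Pv (v : I -> S) := \sum_(l : 'I_L) \sum_(j : 'I_N)
  v (inl (l, j)) *: (map_poly f (qt l) * 'X^j) + v (inr true) *: 'X - (v (inr false))%:P.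
have coefP v k : (Pv v)`_k = \sum_i f (A k i) * v i.
  rewrite big_sumType /= big_bool /=.
  have -> : \sum_(p : 'I_L * 'I_N) f (A k (inl p)) * v (inl p) =
      \sum_l \sum_j f (A k (inl (l, j))) * v (inl (l, j)).
    by rewrite pair_bigA; apply: eq_bigr => -[l j].
  rewrite coefB coefD coef_sum addrA; congr (_ + _ + _).
  - apply: eq_bigr => l _; rewrite coef_sum; apply: eq_bigr => j _.
    rewrite coefZ coefMXn coef_map /=; case: ifP => _; first by rewrite mulr0 rmorph0 mul0r.
    by rewrite mulrC.
  - by rewrite coefZ coefX mulrC; case: (k == 1)%N; rewrite ?rmorph1 ?rmorph0.
  - by rewrite coefC rmorphN mulNr; case: (k == 0)%N; rewrite ?rmorph1 ?rmorph0 ?mul1r ?mul0r.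
have Pm0 : Pv m = 0.
  have e1 l : \sum_(j : 'I_N) (bt l)`_j *: (map_poly f (qt l) * 'X^j) =
      bt l * map_poly f (qt l).
    under eq_bigr do rewrite scalerAr.
    rewrite -mulr_sumr mulrC; congr (_ * _).
    rewrite -poly_def; apply/polyP => i; rewrite coef_poly.
    case: ltnP => // h; rewrite nth_default //.
    by apply: leq_trans h; apply: ltnW.
  rewrite /Pv; under eq_bigr do rewrite e1.
  have -> : \sum_(l : 'I_L) bt l * map_poly f (qt l) = z%:P - 'X.
    rewrite es (big_nth x0) big_mkord //.
  by rewrite /= scale1r addrNK subrr.
pose p := (N + N).+2.
have A0 k i : (p <= k)%N -> A k i = 0.
  move=> pk; case: i => [[l j]|[]] /=.
  - case: ifP => // _; rewrite nth_default //.
    have := szq l; have := ltn_ord j; move: pk; rewrite /p; move: (size (qt l)) (nat_of_ord j) k => a b c; move: (N) => d; lia.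
  - by case: k pk => [|[|k]] //.
  - by case: k pk => [|k] //; rewrite oppr0.
have Cm i : Cz f z (m i).
  case: i => [[l j]|[]] /=; [by case: (Hsl l) => + _; apply|exact: Cz1|exact: Czz].
have eqs k : (k < p)%N -> \sum_i f (A k i) * m i = 0.
  by move=> _; rewrite -coefP Pm0 coef0.
have [K [B [y [Cy my eB]]]] := @flat_sys R S f (Cz f z) fl I p A m Cm eqs.
exists K, (fun t => B (inr true) t), (fun t => B (inr false) t), y; split => //.
  move=> t.
  pose v i := f (B i t).
  have Pv0 : Pv v = 0.
    apply/polyP => k; rewrite coefP coef0.
    have [kp|pk] := ltnP k p.
      rewrite /v; under eq_bigr do rewrite -rmorphM.
      by rewrite -rmorph_sum eB // rmorph0.
    by rewrite big1 // => i _; rewrite A0 // rmorph0 mul0r.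
  have := congr1 (fun P => P.[z]) Pv0; rewrite /Pv /= hornerD hornerN hornerD.
  rewrite horner_sum big1 ?add0r; last first.
    move=> l _; rewrite horner_sum big1 // => j _.
    rewrite hornerZ hornerM -evzE; case: (Hsl l) => _ ->.
    by rewrite mul0r mulr0.
  rewrite hornerZ hornerX hornerC horner0 /v => /eqP; rewrite subr_eq0 => /eqP.
  by rewrite mulrC.
by rewrite -[LHS]/(m (inr true)) my.
Qed.
End Cond.

Theorem mainTheorem6 (R S : comNzRingType) (f : {rmorphism R -> S}) :
  is_local R -> injective f -> finite_type f ->
  (pruefer f <-> exists s : R, strong_divisor s /\ is_localization_at f s).
Proof.
move=> loc finj ft; split; last by move=> [s [sds lo]]; apply: backward sds lo.
move=> pr.
have [M [iM nM1 unitM]] := local_units loc.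
apply: (assemble finj ft).
apply: (manis_of_L iM nM1 unitM) => z.
have [fl epi] := pr _ (Cz_sub f z) (@Czf _ _ f z).
have [K [e [g [y [Cy eg e1]]]]] := conductor_step fl (epi_step epi).
have [[t nMt]|allM] := pselect (exists t, ~ M (e t)).
  have [v ev] := unitM _ nMt.
  left; exists (v * g t).
  by rewrite rmorphM -(eg t) mulrA -rmorphM [v * _]mulrC ev rmorph1 mul1r.
have Me t : M (e t) by apply: contrapT => h; apply: allM; exists t.
have [pt Hpt] := choice Cy.
right; exists (\sum_t e t *: pt t); split.
  move=> i; rewrite coef_sum; apply: (big_ind M); [exact: M0|exact: MD|].
  by move=> t _; rewrite coefZ; apply: MMr.
rewrite -evzE rmorph_sum e1; apply: eq_bigr => t _.
by rewrite -mul_polyC rmorphM evzC Hpt.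
Qed.
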